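(* Let $n\ge 2$ and $r\ge1$ an integer. (i) There exist $A,B\in\mathrm{SGL}_n(\mathbb{F}_2)$ and linearly independent $\mathbf{x}_1,\ldots,\mathbf{x}_r\in\mathbb{F}_2^n$ with $B-A=\sum_{i=1}^r\mathbf{x}_i\mathbf{x}_i^{\top}$ and $\mathbf{x}_i^{\top}A^{-1}\mathbf{x}_j=1$ for all $i,j$ if and only if $r$ is even and $r\le\lfloor\frac{n+1}{2}\rfloor$. (ii) There exist $A,B\in\mathrm{SGL}_n(\mathbb{F}_2)$ and linearly independent $\mathbf{x}_1,\ldots,\mathbf{x}_r$ with $B-A=\sum_{i=1}^r\mathbf{x}_i\mathbf{x}_i^{\top}$, $\mathbf{x}_i^{\top}A^{-1}\mathbf{x}_i=1$ for all $i$, and $\mathbf{x}_i^{\top}A^{-1}\mathbf{x}_j=0$ for some $i,j$, if and only if $r\in\{1,\ldots,n\}\setminus\{2\}$ is even. (iii) There exist $A,B\in\mathrm{SGL}_n(\mathbb{F}_2)$ and linearly independent $\mathbf{x}_1,\ldots,\mathbf{x}_r$ with $B-A=\sum_{i=1}^r\mathbf{x}_i\mathbf{x}_i^{\top}$ and $[\mathbf{x}_i^{\top}A^{-1}\mathbf{x}_j]_{i,j=1}^r$ of rank one and trace zero if and only if $r\in\{2,3,\ldots,\lfloor\frac{n+1}{2}\rfloor\}$. (iv) For each $r\in\{1,\ldots,n\}$ there exist $A,B\in\mathrm{SGL}_n(\mathbb{F}_2)$ and linearly independent $\mathbf{x}_1,\ldots,\mathbf{x}_r$ with $B-A=\sum_{i=1}^r\mathbf{x}_i\mathbf{x}_i^{\top}$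 such that it is neither the case that $\mathbf{x}_i^{\top}A^{-1}\mathbf{x}_i=1$ for all $i$, nor the case that $[\mathbf{x}_i^{\top}A^{-1}\mathbf{x}_j]_{i,j=1}^r$ has rank one and trace zero.
   Context: $\mathbb{F}_2$ is the binary field; $\mathrm{SGL}_n(\mathbb{F}_2)$ denotes the set of invertible symmetric $n\times n$ matrices over $\mathbb{F}_2$. *)

(* Defs.v *)
From mathcomp Require Import all_boot all_order all_algebra.
Set Implicit Arguments. Unset Strict Implicit. Unset Printing Implicit Defensive.
Import GRing.Theory.
Local Open Scope ring_scope.

Notation F2 := 'F_2.

Definition SGL (n : nat) (A : 'M[F2]_n) : bool := (A^T == A) && (A \in unitmx).

Definition lin_indep (n r : nat) (x : 'I_r -> 'cV[F2]_n) : bool :=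
  row_free (\matrix_(i < r) (x i)^T).

Definition sum_outer (n r : nat) (x : 'I_r -> 'cV[F2]_n) : 'M[F2]_n :=
  \sum_(i < r) (x i *m (x i)^T).

Definition gram (n r : nat) (A : 'M[F2]_n) (x : 'I_r -> 'cV[F2]_n) : 'M[F2]_r :=
  \matrix_(i < r, j < r) ((x i)^T *m invmx A *m x j) 0 0.

Definition setting (n r : nat) (A B : 'M[F2]_n) (x : 'I_r -> 'cV[F2]_n) : Prop :=
  [/\ SGL A, SGL B, lin_indep x & B - A = sum_outer x].

(* Main.v *)
Require Import Defs.
From mathcomp Require Import all_boot all_order all_algebra all_fingroup.
From mathcomp Require Import zify.
Set Implicit Arguments. Unset Strict Implicit. Unset Printing Implicit Defensive.
Import GRing.Theory.
Local Open Scope ring_scope.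

Lemma F2addxx (x : F2) : x + x = 0.
Proof. case: x => [[|[|//]]] ? ; by apply/eqP. Qed.

Lemma F2_cases (x : F2) : x = 0 \/ x = 1.
Proof. case: x => [[|[|//]]] ?; [left|right]; exact/val_inj. Qed.

Lemma F2nat k : (k%:R : F2) = (odd k)%:R.
Proof. have := @Fp_nat_mod 2 (erefl true) k. rewrite modn2 => <-. by []. Qed.

Lemma mxaddxx m n (M : 'M[F2]_(m, n)) : M + M = 0.
Proof. by apply/matrixP => i j; rewrite !mxE F2addxx. Qed.

Lemma pair_sum (T : finType) (f : T -> F2) (s : T -> T) :
  involutive s -> (forall x, f (s x) = f x) ->
  \sum_x f x = \sum_(x | s x == x) f x.
Proof.
move=> sI fs; rewrite (bigID (fun x => s x == x)) /=.
suff -> : \sum_(x | s x != x) f x = 0 by rewrite addr0.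
rewrite (bigID (fun x => enum_rank x < enum_rank (s x))%N) /=.
set S := \sum_(i | _) _.
suff -> : \sum_(x | (s x != x) && ~~ (enum_rank x < enum_rank (s x))%N) f x = S
  by rewrite F2addxx.
rewrite (reindex_inj (inv_inj sI)) /=; apply: eq_big => x; last by rewrite fs.
rewrite sI [s x == x]eq_sym; case: eqP => //= Hx.
have : enum_rank x != enum_rank (s x).
  by apply/negP => /eqP /enum_rank_inj E; exact: Hx E.
by rewrite neq_ltn; case: ltngtP.
Qed.

Lemma det_alt_odd r (K : 'M[F2]_r) :
  K^T = K -> (forall i, K i i = 0) -> odd r -> \det K = 0.
Proof.
move=> Ks K0 rodd.
rewrite /determinant (pair_sum (s := fun p : 'S_r => (p^-1)%g)); last first.
- move=> p; rewrite odd_permV; congr (_ * _).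
  rewrite (reindex_inj (perm_inj (s:=p))) /=; apply: eq_bigr => i _.
  by rewrite permK -{1}Ks mxE.
- exact: invgK.
apply: big1 => p /eqP pI.
have pp : forall i, p (p i) = i by move=> i; rewrite -{1}pI permK.
have /existsP [i /eqP pi] : [exists i, p i == i].
  case: (boolP [exists i, p i == i]) => // /existsPn H; exfalso.
  have := @pair_sum 'I_r (fun _ => 1) p pp (fun _ => erefl).
  rewrite [X in _ = X]big_pred0; last by move=> i; exact/negbTE/H.
  by rewrite sumr_const card_ord F2nat rodd.
by rewrite (bigD1 i) //= pi K0 mul0r mulr0.
Qed.
Definition mkX n r (x : 'I_r -> 'cV[F2]_n) : 'M[F2]_(n, r) := \matrix_(k, i) x i k 0.

Lemma col_mkX n r (x : 'I_r -> 'cV[F2]_n) i : col i (mkX x) = x i.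
Proof. by apply/matrixP => k j; rewrite !mxE ord1. Qed.

Lemma mkX_col n r (X : 'M[F2]_(n, r)) : mkX (fun i => col i X) = X.
Proof. by apply/matrixP => k j; rewrite !mxE. Qed.

Lemma sum_outerE n r (x : 'I_r -> 'cV[F2]_n) : sum_outer x = mkX x *m (mkX x)^T.
Proof.
apply/matrixP => a b; rewrite /sum_outer summxE !mxE; apply: eq_bigr => i _.
by rewrite !mxE big_ord1 !mxE.
Qed.

Lemma gramE n r (A : 'M[F2]_n) (x : 'I_r -> 'cV[F2]_n) :
  gram A x = (mkX x)^T *m invmx A *m mkX x.
Proof.
apply/matrixP => i j; rewrite !mxE; apply: eq_bigr => l _; rewrite !mxE.
congr (_ * _); apply: eq_bigr => k _; by rewrite !mxE.
Qed.

Lemma lin_indepE n r (x : 'I_r -> 'cV[F2]_n) : lin_indep x = row_free (mkX x)^T.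
Proof. by rewrite /lin_indep; congr row_free; apply/matrixP => i k; rewrite !mxE. Qed.

Lemma row_free_ker m n (M : 'M[F2]_(m, n)) :
  (forall u : 'rV_m, u *m M = 0 -> u = 0) -> row_free M.
Proof.
move=> H; rewrite -kermx_eq0; apply/eqP/row_matrixP => i; rewrite row0.
by apply: H; apply/sub_kermxP; exact: row_sub.
Qed.

Section Nec.
Variables (n r : nat) (A B : 'M[F2]_n) (x : 'I_r -> 'cV[F2]_n).
Hypothesis hs : setting A B x.

Lemma nec_sym : (gram A x)^T = gram A x.
Proof.
case: hs => /andP [/eqP At _] _ _ _.
by rewrite gramE !trmx_mul trmxK trmx_inv At mulmxA.
Qed.

Lemma nec_r_le_n : (r <= n)%N.
Proof.
case: hs => _ _; rewrite lin_indepE /row_free => /eqP Xr _.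
by rewrite -Xr rank_leq_col.
Qed.

Lemma nec_unit : (1%:M + gram A x) \in unitmx.
Proof.
case: hs => /andP [/eqP At Au] /andP [_ Bu]; rewrite lin_indepE => Xf.
rewrite sum_outerE => /eqP; rewrite subr_eq => /eqP BE.
rewrite -row_free_unit; apply: row_free_ker => u.
set X := mkX x; rewrite gramE -/X => H.
set w := u *m X^T *m invmx A.
have wB : w *m B = 0.
  rewrite BE addrC mulmxDr /w -mulmxA mulVmx // mulmx1 !mulmxA -mulmxDl.
  by rewrite -[X in X + _]mulmx1 -!mulmxA -mulmxDr !mulmxA H mul0mx.
have w0 : w = 0 by rewrite -(mulmxK Bu w) wB mul0mx.
have uX : u *m X^T = 0 by rewrite -(mulmxKV Au (u *m X^T)) -/w w0 mul0mx.
by apply: (row_free_inj Xf); rewrite uX mul0mx.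
Qed.

Lemma nec_rank : (r + r <= n + \rank (gram A x))%N.
Proof.
case: hs => /andP [_ Au] _; rewrite lin_indepE /row_free => /eqP Xr _.
rewrite gramE -mulmxA.
have := mxrank_mul_min (mkX x)^T (invmx A *m mkX x).
have -> : \rank (invmx A *m mkX x) = r.
  by rewrite -mxrank_tr trmx_mul mxrankMfree ?Xr // row_free_unit unitmx_tr unitmx_inv.
by rewrite Xr leq_subLR.
Qed.
End Nec.
Lemma mxoppF2 m n (M : 'M[F2]_(m, n)) : - M = M.
Proof. by apply/matrixP => i j; rewrite !mxE; case: (F2_cases (M i j)) => ->; rewrite ?oppr0 //; apply/eqP. Qed.

Lemma suff_real n r (X : 'M[F2]_(n, r)) (C : 'M[F2]_n) :
  C^T = C -> C \in unitmx -> row_free X^T ->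
  (1%:M + X^T *m C *m X) \in unitmx ->
  exists (A B : 'M[F2]_n) (x : 'I_r -> 'cV[F2]_n),
    setting A B x /\ gram A x = X^T *m C *m X.
Proof.
move=> Ct Cu Xf Gu.
exists (invmx C), (invmx C + X *m X^T), (fun i => col i X).
split; last by rewrite gramE mkX_col invmxK.
split.
- by apply/andP; split; [apply/eqP; rewrite trmx_inv Ct | rewrite unitmx_inv].
- apply/andP; split.
    by apply/eqP; rewrite linearD /= trmx_inv Ct trmx_mul trmxK.
  set H := invmx (1%:M + X^T *m C *m X).
  suff E : (invmx C + X *m X^T) *m (C - C *m X *m H *m X^T *m C) = 1%:M.
    by case: (mulmx1_unit E).
  have h1 : H + X^T *m C *m X *m H = 1%:M.
    by rewrite -[H in H + _]mul1mx -mulmxDl mulmxV.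
  have key : X *m H *m X^T *m C + X *m X^T *m C *m X *m H *m X^T *m C
             = X *m X^T *m C.
    transitivity (X *m (H + X^T *m C *m X *m H) *m X^T *m C).
      by rewrite mulmxDr !mulmxDl !mulmxA.
    by rewrite h1 mulmx1.
  rewrite mulmxDl !mulmxBr !mulmxA mulVmx // mul1mx !mxoppF2.
  set a := X *m H *m X^T *m C; set b := X *m X^T *m C.
  set c := b *m X *m H *m X^T *m C.
  by rewrite -addrA [a + (b + c)]addrCA key mxaddxx addr0.
- by rewrite lin_indepE mkX_col.
- by rewrite [invmx C + _]addrC addrK sum_outerE mkX_col.
Qed.

Lemma real_block r m (G : 'M[F2]_r) :
  G^T = G -> G \in unitmx -> (1%:M + G) \in unitmx ->
  exists (A B : 'M[F2]_(r + m)) (x : 'I_r -> 'cV[F2]_(r + m)),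
    setting A B x /\ gram A x = G.
Proof.
move=> Gt Gu G1u.
pose X : 'M[F2]_(r + m, r) := col_mx 1%:M 0.
pose C : 'M[F2]_(r + m) := block_mx G 0 0 1%:M.
have E : X^T *m C *m X = G.
  by rewrite /X /C tr_col_mx trmx1 trmx0 mul_row_block mul_row_col !mul1mx !mul0mx !mulmx0
    !addr0 mulmx1.
have h1 : C^T = C.
  by rewrite /C tr_block_mx Gt !trmx0 trmx1.
have h2 : C \in unitmx by rewrite unitmxE det_ublock det1 mulr1 -unitmxE.
have h3 : row_free X^T.
  apply/row_freeP; exists (col_mx 1%:M 0).
  by rewrite /X tr_col_mx trmx1 trmx0 mul_row_col mulmx1 mulmx0 addr0.
have h4 : (1%:M + X^T *m C *m X) \in unitmx by rewrite E.
have [A [B [x [hs hg]]]] := suff_real h1 h2 h3 h4.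
by exists A, B, x; rewrite hg E.
Qed.

Lemma real_r1 m :
  exists (A B : 'M[F2]_(1 + 1 + m)) (x : 'I_1 -> 'cV[F2]_(1 + 1 + m)),
    setting A B x /\ gram A x = 0.
Proof.
pose X : 'M[F2]_(1 + 1 + m, 1) := col_mx (col_mx 1%:M 1%:M) 0.
have E : X^T *m 1%:M *m X = 0.
  by rewrite mulmx1 /X !tr_col_mx !mul_row_col !trmx1 trmx0 !mulmx1 mul0mx addr0 mxaddxx.
have h3 : row_free X^T.
  apply/row_freeP; exists (col_mx (col_mx 1%:M 0) 0).
  by rewrite /X !tr_col_mx !mul_row_col !trmx1 trmx0 !mulmx1 !mulmx0 !addr0.
have h4 : (1%:M + X^T *m 1%:M *m X) \in unitmx by rewrite E addr0 unitmx1.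
have [A [B [x [hs hg]]]] := suff_real (trmx1 _ _) (unitmx1 _ _) h3 h4.
by exists A, B, x; rewrite hg E.
Qed.

Lemma real_rank1 r' m (c' : 'cV[F2]_r') (c : 'cV[F2]_(1 + r')) :
  c = col_mx 1%:M c' -> c^T *m c = 0 ->
  exists (A B : 'M[F2]_(1 + r' + r' + m)) (x : 'I_(1 + r') -> 'cV[F2]_(1 + r' + r' + m)),
    setting A B x /\ gram A x = c *m c^T.
Proof.
move=> cE cc.
pose Z : 'M[F2]_(r', 1 + r') := row_mx 0 1%:M.
pose X : 'M[F2]_(1 + r' + r' + m, 1 + r') := col_mx (col_mx (col_mx c^T Z) Z) 0.
have E : X^T *m 1%:M *m X = c *m c^T.
  by rewrite mulmx1 /X !tr_col_mx !mul_row_col trmxK trmx0 mul0mx addr0 -addrA mxaddxx addr0.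
have h3 : row_free X^T.
  apply/row_freeP.
  exists (col_mx (col_mx (col_mx (row_mx 1%:M 0) (row_mx c' 1%:M)) 0) 0).
  rewrite /X !tr_col_mx !mul_row_col !mulmx0 !addr0 trmxK /Z tr_row_mx !trmx0 trmx1 cE.
  rewrite mul_col_row mul_col_row !mul0mx !mul1mx mulmx1 mulmx0 add_block_mx.
  by rewrite !add0r addr0 mxaddxx -scalar_mx_block.
have h4 : (1%:M + X^T *m 1%:M *m X) \in unitmx.
  rewrite E; case: (@mulmx1_unit _ _ (1%:M + c *m c^T) (1%:M + c *m c^T)) => //.
  rewrite mulmxDl !mulmxDr !mul1mx mulmx1 !mulmxA -(mulmxA c) cc mulmx0 mul0mx addr0.
  by rewrite -addrA mxaddxx addr0.
have [A [B [x [hs hg]]]] := suff_real (trmx1 _ _) (unitmx1 _ _) h3 h4.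
by exists A, B, x; rewrite hg E.
Qed.

Definition good r (M : 'M[F2]_r) :=
  [/\ M^T = M, M \in unitmx & (1%:M + M) \in unitmx].

Lemma good_block a d (P : 'M[F2]_a) (D : 'M[F2]_d) :
  good P -> good D -> good (block_mx P 0 0 D).
Proof.
case=> Pt Pu P1u [Dt Du D1u]; split.
- by rewrite tr_block_mx Pt Dt !trmx0.
- by rewrite unitmxE det_ublock unitrM -!unitmxE Pu Du.
- rewrite [1%:M]scalar_mx_block add_block_mx !addr0.
  by rewrite unitmxE det_ublock unitrM -!unitmxE P1u D1u.
Qed.

Lemma good0 : good (0 : 'M[F2]_0).
Proof. by split; rewrite ?trmx0 // unitmxE det_mx00 unitr1. Qed.

Lemma diag_block a d (P : 'M[F2]_a) (D : 'M[F2]_d) :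
  (forall i, P i i = 1) -> (forall i, D i i = 1) -> forall i, block_mx P 0 0 D i i = 1.
Proof.
move=> HP HD i; rewrite -(splitK i); case: (split i) => j /=.
  by rewrite block_mxEul.
by rewrite block_mxEdr.
Qed.

Fixpoint qsz (q k : nat) : nat := if k is k'.+1 then (q + qsz q k')%N else 0%N.
Fixpoint qpow q (Q : 'M[F2]_q) k : 'M[F2]_(qsz q k) :=
  if k is k'.+1 return 'M[F2]_(qsz q k) then block_mx Q 0 0 (qpow Q k') else 0.

Lemma qszE q k : qsz q k = (q * k)%N.
Proof. by elim: k => [|k /= ->]; rewrite ?muln0 ?mulnS. Qed.

Lemma good_qpow q (Q : 'M[F2]_q) k : good Q -> good (qpow Q k).
Proof. by move=> gQ; elim: k => [|k IH] /=; [exact: good0 | exact: good_block]. Qed.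

Lemma diag_qpow q (Q : 'M[F2]_q) k : (forall i, Q i i = 1) -> forall i, qpow Q k i i = 1.
Proof.
move=> HQ; elim: k => [|k IH] /=; first by case.
exact: diag_block.
Qed.

Definition fM n (l : seq (seq nat)) : 'M[F2]_n :=
  \matrix_(i, j) (nth 0%N (nth [::] l i) j)%:R.

Lemma good_fM n l li lp : (fM n l)^T = fM n l -> fM n l *m fM n li = 1%:M ->
  (1%:M + fM n l) *m fM n lp = 1%:M -> good (fM n l).
Proof.
move=> h1 h2 h3; split => //; [exact: (mulmx1_unit h2).1 | exact: (mulmx1_unit h3).1].
Qed.

Ltac oc2 := case => [[|[|//]] ?].
Ltac oc3 := case => [[|[|[|//]]] ?].
Ltac oc4 := case => [[|[|[|[|//]]]] ?].
Ltac oc6 := case => [[|[|[|[|[|[|//]]]]]] ?].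

Ltac symtac oc := apply/matrixP; oc; oc; rewrite !mxE; by [].
Ltac multac oc := apply/matrixP; oc; oc; rewrite !mxE !big_ord_recl big_ord0 !mxE;
  by apply/eqP.

Definition K2 := fM 2 [:: [:: 0; 1]; [:: 1; 1]]%N.
Lemma good_K2 : good K2.
Proof.
apply: (@good_fM _ _ [:: [:: 1; 1]; [:: 1; 0]]%N [:: [:: 0; 1]; [:: 1; 1]]%N).
- symtac oc2.
- multac oc2.
- multac oc2.
Qed.
Lemma K2_00 : K2 0 0 = 0. Proof. by rewrite mxE. Qed.

Definition M3 := fM 3 [:: [:: 0; 0; 1]; [:: 0; 1; 1]; [:: 1; 1; 0]]%N.
Lemma good_M3 : good M3.
Proof.
apply: (@good_fM _ _ [:: [:: 1; 1; 1]; [:: 1; 1; 0]; [:: 1; 0; 0]]%N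
   [:: [:: 1; 1; 0]; [:: 1; 0; 1]; [:: 0; 1; 0]]%N).
- symtac oc3.
- multac oc3.
- multac oc3.
Qed.
Lemma M3_00 : M3 0 0 = 0. Proof. by rewrite mxE. Qed.

Definition B4 := fM 4 [:: [:: 1; 0; 0; 1]; [:: 0; 1; 1; 0]; [:: 0; 1; 1; 1]; [:: 1; 0; 1; 1]]%N.
Lemma good_B4 : good B4.
Proof.
apply: (@good_fM _ _ [:: [:: 1; 1; 1; 0]; [:: 1; 1; 0; 1]; [:: 1; 0; 0; 1]; [:: 0; 1; 1; 0]]%N
  [:: [:: 0; 1; 0; 1]; [:: 1; 0; 1; 0]; [:: 0; 1; 0; 0]; [:: 1; 0; 0; 0]]%N).
- symtac oc4.
- multac oc4.
- multac oc4.
Qed.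
Lemma B4_diag i : B4 i i = 1. Proof. rewrite mxE; move: i; oc4; by []. Qed.
Lemma B4_01 : B4 0 (inord 1) = 0. Proof. by rewrite mxE inordK. Qed.

Definition B6 := fM 6 [:: [:: 1; 0; 0; 0; 0; 1]; [:: 0; 1; 0; 0; 1; 0]; [:: 0; 0; 1; 1; 0; 1]; [:: 0; 0; 1; 1; 1; 0]; [:: 0; 1; 0; 1; 1; 0]; [:: 1; 0; 1; 0; 0; 1]]%N.
Lemma good_B6 : good B6.
Proof.
apply: (@good_fM _ _ [:: [:: 0; 1; 1; 0; 1; 1]; [:: 1; 0; 0; 1; 1; 1]; [:: 1; 0; 0; 0; 0; 1]; [:: 0; 1; 0; 0; 1; 0]; [:: 1; 1; 0; 1; 1; 1]; [:: 1; 1; 1; 0; 1; 1]]%N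
  [:: [:: 0; 1; 0; 1; 0; 1]; [:: 1; 0; 1; 0; 1; 0]; [:: 0; 1; 0; 1; 0; 0]; [:: 1; 0; 1; 0; 0; 0]; [:: 0; 1; 0; 0; 0; 0]; [:: 1; 0; 0; 0; 0; 0]]%N).
- symtac oc6.
- multac oc6.
- multac oc6.
Qed.
Lemma B6_diag i : B6 i i = 1. Proof. rewrite mxE; move: i; oc6; by []. Qed.
Lemma B6_01 : B6 0 (inord 1) = 0. Proof. by rewrite mxE inordK. Qed.

Lemma F2_01 : (0 : F2) != 1. Proof. by []. Qed.

Lemma gram_of_size (n r : nat) (hr : (1 <= r)%N) (hrn : (r + r <= n + 1)%N) :
  ~~ odd r ->
  exists (A B : 'M[F2]_n) (x : 'I_r -> 'cV[F2]_n),
      setting A B x /\ (forall i j, gram A x i j = 1).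
Proof.
case: r hr hrn => // r' _ hrn rodd.
have [m nE] : exists m, n = (1 + r' + r' + m)%N by exists (n - (1 + r' + r'))%N; lia.
subst n.
pose c : 'cV[F2]_(1 + r') := const_mx 1.
have cE : c = col_mx 1%:M (const_mx 1).
  apply/matrixP => i j; rewrite -(splitK i); case: (split i) => k /=.
    by rewrite col_mxEu !mxE !ord1.
  by rewrite col_mxEd !mxE.
have cc : c^T *m c = 0.
  apply/matrixP => i j; rewrite !mxE (eq_bigr (fun _ => 1)); last by move=> k _; rewrite !mxE mulr1.
  rewrite sumr_const card_ord F2nat.
  by have -> : odd (1 + r') = false by exact: negbTE rodd.
have [A [B [x [hs hg]]]] := real_rank1 m cE cc.
exists A, B, x; split => // i j; by rewrite hg !mxE big_ord1 !mxE mulr1.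
Qed.

Lemma part1 n r (hn : (2 <= n)%N) (hr : (1 <= r)%N) :
   (exists (A B : 'M[F2]_n) (x : 'I_r -> 'cV[F2]_n),
      setting A B x /\ (forall i j, gram A x i j = 1))
   <-> (~~ odd r /\ (r <= (n + 1)./2)%N).
Proof.
rewrite geq_half_double -addnn; split; last first.
  by case=> ro hrn; exact: gram_of_size.
case=> A [B [x [hs hJ]]].
have GJ : gram A x = const_mx 1 by apply/matrixP => i j; rewrite hJ mxE.
split.
- apply/negP => ro.
  have Gu := nec_unit hs.
  pose u : 'rV[F2]_r := const_mx 1.
  have uG : u *m (1%:M + gram A x) = 0.
    rewrite mulmxDr mulmx1 GJ.
    have -> : u *m const_mx 1 = u.
      apply/matrixP => i j; rewrite !mxE (eq_bigr (fun _ => 1)); last by move=> k _; rewrite !mxE mulr1.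
      by rewrite sumr_const card_ord F2nat ro.
    exact: mxaddxx.
  have u0 : u = 0 by rewrite -(mulmxK Gu u) uG mul0mx.
  by move/matrixP: u0 => /(_ 0 (Ordinal hr)); rewrite !mxE.
- have := nec_rank hs.
  have : (\rank (gram A x) <= 1)%N.
    have -> : gram A x = (const_mx 1 : 'cV[F2]_r) *m (const_mx 1 : 'rV[F2]_r).
      by rewrite GJ; apply/matrixP => i j; rewrite !mxE big_ord1 !mxE mulr1.
    exact: leq_trans (mxrankM_maxl _ _) (rank_leq_col _).
  move: (\rank _) => k; lia.
Qed.

Lemma part3 n r (hn : (2 <= n)%N) (hr : (1 <= r)%N) :
   (exists (A B : 'M[F2]_n) (x : 'I_r -> 'cV[F2]_n),
      [/\ setting A B x, \rank (gram A x) = 1%N & \tr (gram A x) = 0])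
   <-> (2 <= r <= (n + 1)./2)%N.
Proof.
rewrite geq_half_double -addnn; split.
  case=> A [B [x [hs hrk htr]]].
  have := nec_rank hs; rewrite hrk => h.
  apply/andP; split => //.
  case: r hr x hs hrk htr h => [|[|r]] // _ x hs hrk htr _.
  have G0 : gram A x = 0.
    apply/matrixP => i j; rewrite !ord1 [RHS]mxE; move: htr; rewrite /mxtrace big_ord1.
    by [].
  by move: hrk; rewrite G0 mxrank0.
case/andP; case: r hr => [|[|r'']] // _ _ hrn.
set r' := r''.+1.
have [m nE] : exists m, n = (1 + r' + r' + m)%N by exists (n - (1 + r' + r'))%N; lia.
subst n.
pose c' : 'cV[F2]_r' := delta_mx 0 0.
pose c : 'cV[F2]_(1 + r') := col_mx 1%:M c'.
have cc : c^T *m c = 0.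
  rewrite /c tr_col_mx mul_row_col trmx1 mulmx1 /c' trmx_delta mul_delta_mx.
  have -> : (delta_mx 0 0 : 'M[F2]_1) = 1%:M by apply/matrixP => i j; rewrite !ord1 !mxE.
  exact: mxaddxx.
have [A [B [x [hs hg]]]] := real_rank1 m (erefl c) cc.
pose i0 : 'I_(1 + r') := lshift r' 0.
have c00 : c i0 0 = 1 by rewrite /i0 col_mxEu mxE.
exists A, B, x; split => //; rewrite hg.
- apply/eqP; rewrite eqn_leq (leq_trans (mxrankM_maxl _ _) (rank_leq_col _)) /=.
  rewrite lt0n mxrank_eq0; apply/eqP => /matrixP /(_ i0 i0).
  by rewrite mxE big_ord1 [c^T _ _]mxE c00 mulr1 mxE.
- by rewrite mxtrace_mulC cc mxtrace0.
Qed.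

Lemma fam_real p q k m (P : 'M[F2]_p) (Q : 'M[F2]_q) : good P -> good Q ->
  exists (A B : 'M[F2]_(p + qsz q k + m)) (x : 'I_(p + qsz q k) -> 'cV[F2]_(p + qsz q k + m)),
    setting A B x /\ gram A x = block_mx P 0 0 (qpow Q k).
Proof. by move=> gP gQ; case: (good_block gP (good_qpow k gQ)) => Gt Gu G1u; exact: real_block. Qed.

Lemma not_unit_det0 r (K : 'M[F2]_r) : \det K = 0 -> K \notin unitmx.
Proof. by move=> h; rewrite unitmxE h unitr0. Qed.

Lemma part2 n r (hn : (2 <= n)%N) (hr : (1 <= r)%N) :
   (exists (A B : 'M[F2]_n) (x : 'I_r -> 'cV[F2]_n),
      [/\ setting A B x, (forall i, gram A x i i = 1)
        & exists i j, gram A x i j = 0])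
   <-> [/\ (1 <= r <= n)%N, r <> 2%N & ~~ odd r].
Proof.
split.
  case=> A [B [x [hs hd [i0 [j0 hz]]]]].
  have Gs := nec_sym hs; have Gu := nec_unit hs.
  split.
  - by rewrite hr (nec_r_le_n hs).
  - move=> r2; subst r.
    have nij0 : i0 != j0 by apply/eqP => E; move: hz; rewrite E hd.
    have offd : forall i j, i != j -> gram A x i j = 0.
      move=> i j nij.
      have : ((i == i0) && (j == j0)) || ((i == j0) && (j == i0)).
        move: (ltn_ord i) (ltn_ord j) (ltn_ord i0) (ltn_ord j0) nij nij0.
        rewrite -!val_eqE /=; lia.
      case/orP => /andP [/eqP -> /eqP ->] //.
      by rewrite -Gs mxE.
    have K0 : 1%:M + gram A x = 0.
      apply/matrixP => i j; rewrite mxE [(1%:M : 'M_2) _ _]mxE [(0 : 'M_2) _ _]mxE; case: (eqVneq i j) => [-> | nij].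
        by rewrite hd; exact: F2addxx.
      by rewrite offd // add0r.
    by move: Gu; rewrite K0 unitmxE det0 unitr0.
  - apply/negP => ro.
    move: Gu; apply/negP; apply: not_unit_det0; apply: det_alt_odd => //.
      by rewrite linearD /= trmx1 Gs.
    by move=> i; rewrite mxE [(1%:M : 'M_r) _ _]mxE eqxx hd F2addxx.
case=> /andP [_ hrn] r2 re.
have r4 : (4 <= r)%N.
  case: r hr hrn r2 re => [|[|[|[|r]]]] //.
case: (boolP (r %% 4 == 0)%N) => h4.
- have [k rE] : exists k, r = (4 + qsz 4 k)%N.
    by exists (r %/ 4 - 1)%N; rewrite qszE; move/eqP: h4 => h4; lia.
  subst r.
  have [m nE] : exists m, n = (4 + qsz 4 k + m)%N by exists (n - (4 + qsz 4 k))%N; lia.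
  subst n.
  have [A [B [x [hs hg]]]] := fam_real k m good_B4 good_B4.
  exists A, B, x; split => //; rewrite hg.
    by apply: diag_block => //; [exact: B4_diag | exact: diag_qpow B4_diag].
  by exists (lshift _ 0), (lshift _ (inord 1)); rewrite block_mxEul B4_01.
- have [k rE] : exists k, r = (6 + qsz 4 k)%N.
    exists ((r - 6) %/ 4)%N; rewrite qszE.
    have r2' : (r %% 2 = 0)%N by rewrite modn2 (negbTE re).
    have h4' : (r %% 4 <> 0)%N by move=> E; rewrite E in h4.
    lia.
  subst r.
  have [m nE] : exists m, n = (6 + qsz 4 k + m)%N by exists (n - (6 + qsz 4 k))%N; lia.
  subst n.
  have [A [B [x [hs hg]]]] := fam_real k m good_B6 good_B4.
  exists A, B, x; split => //; rewrite hg.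
    by apply: diag_block => //; [exact: B6_diag | exact: diag_qpow B4_diag].
  by exists (lshift _ 0), (lshift _ (inord 1)); rewrite block_mxEul B6_01.
Qed.

Lemma fam_iv p q k m (P : 'M[F2]_p.+1) (Q : 'M[F2]_q) : good P -> good Q ->
  P 0 0 = 0 -> (1 <= p)%N ->
  exists (A B : 'M[F2]_(p.+1 + qsz q k + m)) (x : 'I_(p.+1 + qsz q k) -> 'cV[F2]_(p.+1 + qsz q k + m)),
      [/\ setting A B x,
          ~ (forall i, gram A x i i = 1)
        & ~ (\rank (gram A x) = 1%N /\ \tr (gram A x) = 0)].
Proof.
move=> gP gQ P00 p2.
have [A [B [x [hs hg]]]] := fam_real k m gP gQ.
case: (good_block gP (good_qpow k gQ)) => _ Gu _.
exists A, B, x; split => //; rewrite hg.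
  by move/(_ (lshift _ 0)); rewrite block_mxEul P00.
by rewrite (mxrank_unit Gu) => -[h _]; move: h p2; lia.
Qed.

Lemma part4 n r (hn : (2 <= n)%N) (hr : (1 <= r)%N) :
   ((r <= n)%N ->
    exists (A B : 'M[F2]_n) (x : 'I_r -> 'cV[F2]_n),
      [/\ setting A B x,
          ~ (forall i, gram A x i i = 1)
        & ~ (\rank (gram A x) = 1%N /\ \tr (gram A x) = 0)]).
Proof.
move=> hrn.
case: (ltngtP r 1) => [|r1|r1]; first by case: r hr {hrn}.
- case: (boolP (odd r)) => ro.
  + have [k rE] : exists k, r = (3 + qsz 2 k)%N.
      exists ((r - 3) %/ 2)%N; rewrite qszE.
      have r2' : (r %% 2 = 1)%N by rewrite modn2 ro.
      lia.
    subst r.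
    have [m nE] : exists m, n = (3 + qsz 2 k + m)%N by exists (n - (3 + qsz 2 k))%N; lia.
    subst n.
    exact: fam_iv good_M3 good_K2 M3_00 _.
  + have [k rE] : exists k, r = (2 + qsz 2 k)%N.
      exists ((r - 2) %/ 2)%N; rewrite qszE.
      have r2' : (r %% 2 = 0)%N by rewrite modn2 (negbTE ro).
      lia.
    subst r.
    have [m nE] : exists m, n = (2 + qsz 2 k + m)%N by exists (n - (2 + qsz 2 k))%N; lia.
    subst n.
    exact: fam_iv good_K2 good_K2 K2_00 _.
- subst r.
  have [m nE] : exists m, n = (1 + 1 + m)%N by exists (n - 2)%N; lia.
  subst n.
  have [A [B [x [hs hg]]]] := real_r1 m.
  exists A, B, x; split => //; rewrite hg.
    by move/(_ 0); rewrite mxE.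
  by rewrite mxrank0 => -[].
Qed.

Unset Implicit Arguments.

Theorem lemma7p1 (n r : nat) (hn : (2 <= n)%N) (hr : (1 <= r)%N) :
  [/\
   (* (i) *)
   (exists (A B : 'M[F2]_n) (x : 'I_r -> 'cV[F2]_n),
      setting A B x /\ (forall i j, gram A x i j = 1))
   <-> (~~ odd r /\ (r <= (n + 1)./2)%N),
   (* (ii) *)
   (exists (A B : 'M[F2]_n) (x : 'I_r -> 'cV[F2]_n),
      [/\ setting A B x, (forall i, gram A x i i = 1)
        & exists i j, gram A x i j = 0])
   <-> [/\ (1 <= r <= n)%N, r <> 2%N & ~~ odd r],
   (* (iii) *)
   (exists (A B : 'M[F2]_n) (x : 'I_r -> 'cV[F2]_n),
      [/\ setting A B x, \rank (gram A x) = 1%N & \tr (gram A x) = 0])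
   <-> (2 <= r <= (n + 1)./2)%N
  &
   (* (iv) *)
   ((r <= n)%N ->
    exists (A B : 'M[F2]_n) (x : 'I_r -> 'cV[F2]_n),
      [/\ setting A B x,
          ~ (forall i, gram A x i i = 1)
        & ~ (\rank (gram A x) = 1%N /\ \tr (gram A x) = 0)])].
Proof.
split; [exact: part1 | exact: part2 | exact: part3 | exact: part4].
Qed.
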